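(* For every $n\in\mathbb{N}$, every (not necessarily linear) weak-2-local derivation $\Delta: M_n\to M_n$ on the C$^*$-algebra $M_n=M_n(\mathbb{C})$ of complex $n\times n$ matrices is a linear derivation.
   Context: A derivation on a C$^*$-algebra $A$ is a linear map $D:A\to A$ with $D(ab)=D(a)b+aD(b)$. A (not necessarily linear) map $\Delta:A\to A$ is a weak-2-local derivation if for every $a,b\in A$ and every $\phi\in A^*$ there exists a derivation $D_{a,b,\phi}:A\to A$ such that $\phi\Delta(a)=\phi D_{a,b,\phi}(a)$ and $\phi\Delta(b)=\phi D_{a,b,\phi}(b)$. *)

(* Defs.v *)
From HB Require Import structures.
From mathcomp Require Import all_boot all_order all_algebra.
From mathcomp Require Import complex.
From mathcomp Require Import reals.
Set Implicit Arguments. Unset Strict Implicit. Unset Printing Implicit Defensive.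
Import Order.TTheory GRing.Theory Num.Theory.
Local Open Scope ring_scope.

Definition Clinear (R : realType) (V W : lmodType R[i]) (f : V -> W) : Prop :=
  forall (c : R[i]) (x y : V), f (c *: x + y) = c *: f x + f y.

Definition is_derivation (R : realType) (n : nat)
    (D : 'M[R[i]]_n -> 'M[R[i]]_n) : Prop :=
  Clinear (D : 'M[R[i]]_n -> 'M[R[i]]_n) /\
  forall a b : 'M[R[i]]_n, D (a *m b) = D a *m b + a *m D b.

(* Dual space of M_n(C): M_n is finite dimensional, so every linear
   functional is continuous and A^* is the space of all C-linear maps
   M_n(C) -> C. *)
Definition is_functional (R : realType) (n : nat) (phi : 'M[R[i]]_n -> R[i]) : Prop :=
  forall (c : R[i]) (x y : 'M[R[i]]_n), phi (c *: x + y) = c * phi x + phi y.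

Definition weak_2_local_derivation (R : realType) (n : nat)
    (Delta : 'M[R[i]]_n -> 'M[R[i]]_n) : Prop :=
  forall (a b : 'M[R[i]]_n) (phi : 'M[R[i]]_n -> R[i]),
    is_functional phi ->
    exists D : 'M[R[i]]_n -> 'M[R[i]]_n,
      is_derivation D /\ phi (Delta a) = phi (D a) /\ phi (Delta b) = phi (D b).

(* Main.v *)
Require Import Defs.
From HB Require Import structures.
From mathcomp Require Import all_boot all_order all_algebra.
From mathcomp Require Import complex reals.
Set Implicit Arguments. Unset Strict Implicit. Unset Printing Implicit Defensive.
Import Order.TTheory GRing.Theory Num.Theory.
Local Open Scope ring_scope.

Lemma tr_delta (K : comPzSemiRingType) m (A : 'M[K]_m) (i j : 'I_m) :
  \tr (A *m delta_mx j i) = A i j.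
Proof.
rewrite /mxtrace (bigD1 i) //= big1 ?addr0.
  rewrite !mxE (bigD1 j) //= big1 ?addr0 ?mxE ?eqxx ?mulr1 //.
  by move=> k /negbTE kj; rewrite mxE kj mulr0.
move=> k /negbTE ki; rewrite !mxE big1 // => r _; by rewrite mxE ki andbF mulr0.
Qed.



Lemma Clin0 (R : realType) (V W : lmodType R[i]) (f : V -> W) : Clinear f -> f 0 = 0.
Proof.
move=> H; have := H 1 0 0; rewrite !scale1r addr0 => /(congr1 (fun t => t - f 0)).
by rewrite subrr addrK => <-.
Qed.

Lemma ClinD (R : realType) (V W : lmodType R[i]) (f : V -> W) : Clinear f ->
  forall x y, f (x + y) = f x + f y.
Proof. by move=> H x y; have := H 1 x y; rewrite !scale1r. Qed.

Lemma ClinZ (R : realType) (V W : lmodType R[i]) (f : V -> W) : Clinear f ->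
  forall c x, f (c *: x) = c *: f x.
Proof. by move=> H c x; have := H c x 0; rewrite addr0 (Clin0 H) addr0. Qed.

Lemma Clin_sum (R : realType) (V W : lmodType R[i]) (f : V -> W) : Clinear f ->
  forall (I : finType) (F : I -> V), f (\sum_i F i) = \sum_i f (F i).
Proof. by move=> H I F; apply: (big_morph f (ClinD H) (Clin0 H)). Qed.

Lemma Clinear_eq (R : realType) n (f g : 'M[R[i]]_n -> 'M[R[i]]_n) :
  Clinear f -> Clinear g -> (forall i j, f (delta_mx i j) = g (delta_mx i j)) ->
  forall x, f x = g x.
Proof.
move=> Hf Hg H x; rewrite (matrix_sum_delta x) !Clin_sum //; apply: eq_bigr => i _.
by rewrite !Clin_sum //; apply: eq_bigr => j _; rewrite !ClinZ // H.
Qed.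

Lemma Clinear_ad (R : realType) n (z : 'M[R[i]]_n) : Clinear (fun x => z *m x - x *m z).
Proof.
move=> c x y; rewrite mulmxDr mulmxDl -scalemxAr -scalemxAl scalerBr.
by rewrite addrACA opprD.
Qed.

Lemma sum_unit (R : realType) n (g : 'I_n.+1 -> 'M[R[i]]_n.+1) p q :
  (\sum_k g k *m (delta_mx 0 k : 'M[R[i]]_n.+1)) *m (delta_mx p q : 'M[R[i]]_n.+1)
  = g p *m (delta_mx 0 q : 'M[R[i]]_n.+1).
Proof.
rewrite mulmx_suml (bigD1 p) //= big1 ?addr0 -?mulmxA ?mul_delta_mx_cond ?eqxx //.
by move=> k /negbTE kp; rewrite -mulmxA mul_delta_mx_cond kp mulr0n mulmx0.
Qed.

Lemma sum_delta1 (R : realType) n : \sum_k (delta_mx k k : 'M[R[i]]_n) = 1%:M.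
Proof.
apply/matrixP => a b; rewrite summxE (bigD1 a) //= big1 ?addr0.
  by rewrite !mxE eqxx eq_sym.
by move=> k /negbTE ka; rewrite mxE (eq_sym a k) ka.
Qed.

Lemma inner (R : realType) n (D : 'M[R[i]]_n.+1 -> 'M[R[i]]_n.+1) :
  is_derivation D ->
  forall x, D x = (\sum_k D (delta_mx k 0) *m delta_mx 0 k) *m x
                  - x *m (\sum_k D (delta_mx k 0) *m delta_mx 0 k).
Proof.
case=> Hl Hm; apply: (Clinear_eq Hl (Clinear_ad _)) => i j.
rewrite sum_unit mulmx_sumr.
have E k : delta_mx i j *m (D (delta_mx k 0) *m delta_mx 0 k)
   = D (delta_mx i j *m delta_mx k 0) *m delta_mx 0 k
     - D (delta_mx i j) *m (delta_mx k k).
  rewrite Hm mulmxA mulmxDl -(mulmxA _ (delta_mx k 0)) mul_delta_mx_cond eqxx mulr1n.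
  by rewrite addrAC subrr add0r.
under eq_bigr => k _ do rewrite E.
rewrite sumrB -mulmx_sumr sum_delta1 mulmx1 (bigD1 j) //= big1 ?addr0.
  by rewrite mul_delta_mx_cond eqxx mulr1n opprB addrC subrK.
by move=> k /negbTE kj; rewrite mul_delta_mx_cond eq_sym kj mulr0n (Clin0 Hl) mul0mx.
Qed.

Lemma trB (R : realType) n (x y : 'M[R[i]]_n) : \tr (x - y) = \tr x - \tr y.
Proof. exact: raddfB. Qed.

Lemma trad0 (R : realType) n (a z : 'M[R[i]]_n) : \tr (a *m (z *m a - a *m z)) = 0.
Proof.
rewrite mulmxBr trB.
have -> : \tr (a *m (a *m z)) = \tr (a *m z *m a) by rewrite mxtrace_mulC.
by rewrite mulmxA subrr.
Qed.

Lemma trad0' (R : realType) n (a z : 'M[R[i]]_n) : \tr ((z *m a - a *m z) *m a) = 0.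
Proof. by rewrite mxtrace_mulC trad0. Qed.

Lemma trad_comm (R : realType) n (z a c : 'M[R[i]]_n) :
  \tr ((z *m a - a *m z) *m c) = \tr (z *m (a *m c - c *m a)).
Proof.
rewrite mulmxBl mulmxBr !trB !mulmxA; congr (_ - _).
by rewrite mxtrace_mulC mulmxA mxtrace_mulC mulmxA.
Qed.

Lemma func_tr (R : realType) n (w a : 'M[R[i]]_n) :
  is_functional (fun x => \tr (x *m w) + \tr (a *m x)).
Proof.
move=> c x y; rewrite mulmxDl mulmxDr -scalemxAl -scalemxAr !mxtraceD !mxtraceZ.
by rewrite mulrDr addrACA.
Qed.

Lemma W (R : realType) n (Delta : 'M[R[i]]_n.+1 -> 'M[R[i]]_n.+1) :
  weak_2_local_derivation Delta -> forall phi, is_functional phi -> forall a b,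
  exists z, phi (Delta a) = phi (z *m a - a *m z) /\ phi (Delta b) = phi (z *m b - b *m z).
Proof.
move=> H phi Hphi a b; have [D [HD [E1 E2]]] := H a b phi Hphi.
by exists (\sum_k D (delta_mx k 0) *m delta_mx 0 k); rewrite E1 E2 !(inner HD).
Qed.

Lemma K1 (R : realType) n (Delta : 'M[R[i]]_n.+1 -> 'M[R[i]]_n.+1) :
  weak_2_local_derivation Delta -> forall a, \tr (a *m Delta a) = 0.
Proof.
move=> H a; have [z [E _]] := W H (func_tr 0 a) a a.
by move: E; rewrite !mulmx0 mxtrace0 !add0r trad0.
Qed.

Lemma K1' (R : realType) n (Delta : 'M[R[i]]_n.+1 -> 'M[R[i]]_n.+1) :
  weak_2_local_derivation Delta -> forall a, \tr (Delta a *m a) = 0.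
Proof. by move=> H a; rewrite mxtrace_mulC (K1 H). Qed.

Lemma K2 (R : realType) n (Delta : 'M[R[i]]_n.+1 -> 'M[R[i]]_n.+1) :
  weak_2_local_derivation Delta -> forall a w,
  \tr (Delta a *m w) = - \tr (a *m Delta w).
Proof.
move=> H a w; have [z [E1 E2]] := W H (func_tr w a) a w.
move: E1 E2; rewrite (K1 H) (K1' H) trad0 trad0' addr0 add0r => -> ->.
apply/eqP; rewrite -addr_eq0 trad_comm !mulmxBr !trB.
have -> : \tr (z *m (w *m a)) = \tr (a *m (z *m w)) by rewrite mulmxA mxtrace_mulC.
have -> : \tr (a *m (w *m z)) = \tr (z *m (a *m w)) by rewrite mulmxA mxtrace_mulC.
by rewrite addr0 add0r addrA subrK subrr.
Qed.

Lemma K3 (R : realType) n (Delta : 'M[R[i]]_n.+1 -> 'M[R[i]]_n.+1) :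
  weak_2_local_derivation Delta -> Clinear Delta.
Proof.
move=> H c x y; apply/matrixP => i j.
rewrite !mxE -!(tr_delta _ i j) !(K2 H) mulmxDl -scalemxAl mxtraceD mxtraceZ.
by rewrite opprD mulrN.
Qed.

Lemma K4 (R : realType) n (Delta : 'M[R[i]]_n.+1 -> 'M[R[i]]_n.+1) :
  weak_2_local_derivation Delta -> forall a c, a *m c = c *m a ->
  \tr (Delta a *m c) = 0.
Proof.
move=> H a c ac; have [z [E _]] := W H (func_tr c 0) a a.
by move: E; rewrite !mul0mx mxtrace0 !addr0 trad_comm ac subrr mulmx0 mxtrace0.
Qed.

Lemma Szero (R : realType) n (f : 'M[R[i]]_n.+1 -> 'M[R[i]]_n.+1) :
  Clinear f ->
  (forall a c, \tr (f a *m c) = - \tr (f c *m a)) ->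
  (forall a c, a *m c = c *m a -> \tr (f a *m c) = 0) ->
  (forall p q, \tr (f (delta_mx p 0) *m delta_mx 0 q) = 0) ->
  forall x, f x = 0.
Proof.
move=> Hl Ha Hc P3.
pose E (i j : 'I_n.+1) : 'M[R[i]]_n.+1 := delta_mx i j.
pose S a c := \tr (f a *m c).
have SD a b c : S (a + b) c = S a c + S b c by rewrite /S (ClinD Hl) mulmxDl mxtraceD.
have SDr a b c : S a (b + c) = S a b + S a c by rewrite /S mulmxDr mxtraceD.
have SBr a b c : S a (b - c) = S a b - S a c by rewrite /S mulmxBr trB.
have comm0 i j k l : j != k -> l != i -> S (E i j) (E k l) = 0.
  move=> jk li; apply: Hc; rewrite /E !mul_delta_mx_cond (negbTE jk) (negbTE li).
  by rewrite !mulr0n.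
have off i j l : l != i -> S (E i j) (E j l) = 0.
  move=> li; case j0: (j == 0); first by move/eqP: j0 => ->; exact: P3.
  have cm : (E i j + E i 0) *m (E j l - E 0 l) = (E j l - E 0 l) *m (E i j + E i 0).
    rewrite /E !(mulmxDl, mulmxDr, mulmxBl, mulmxBr, mulmxN, mulNmx) !mul_delta_mx_cond.
    rewrite eqxx (eq_sym 0 j) j0 (negbTE li) !mulr0n !mulr1n.
    by rewrite !(subr0, add0r, addr0, oppr0) subrr.
  have := Hc _ _ cm; rewrite -/(S _ _) SD !SBr (comm0 i j 0 l) ?j0 // (comm0 i 0 j l) //; last by rewrite eq_sym j0.
  have -> : S (E i 0) (E 0 l) = 0 by exact: P3.
  by rewrite !subr0 addr0.
have diag i j : S (E i j) (E j i) = 0.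
  case ij: (i == j); first by move/eqP: ij => ->; apply: Hc.
  case i0: (i == 0); first by move/eqP: i0 => ->; rewrite /S /E Ha P3 oppr0.
  case j0: (j == 0); first by move/eqP: j0 => ->; exact: P3.
  have nij : i != j by rewrite ij.
  have nji : j != i by rewrite eq_sym ij.
  have ni0 : i != 0 by rewrite i0.
  have n0i : 0 != i by rewrite eq_sym i0.
  have nj0 : j != 0 by rewrite j0.
  have n0j : 0 != j by rewrite eq_sym j0.
  pose P := E i j + E j 0 + E 0 i.
  have PP : P *m P = E i 0 + E j i + E 0 j.
    rewrite /P /E !(mulmxDl, mulmxDr) !mul_delta_mx_cond !eqxx.
    rewrite (negbTE nij) (negbTE nji) (negbTE ni0) (negbTE n0i) (negbTE nj0) (negbTE n0j).
    by rewrite !mulr0n !mulr1n !(addr0, add0r).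
  have := Hc P (P *m P) (mulmxA P P P).
  rewrite PP -/(S _ _) /P !(SD, SDr).
  rewrite (comm0 i j i 0) // (comm0 i j 0 j) // (comm0 j 0 i 0) // (comm0 j 0 j i) //.
  rewrite (comm0 0 i j i) // (comm0 0 i 0 j) //.
  have -> : S (E j 0) (E 0 j) = 0 by exact: P3.
  have -> : S (E 0 i) (E i 0) = 0 by rewrite /S /E Ha P3 oppr0.
  by rewrite !(addr0, add0r).
have gen i j k l : S (E i j) (E k l) = 0.
  case jk: (j == k); case li: (l == i).
  - by move/eqP: jk => <-; move/eqP: li => ->; exact: diag.
  - by move/eqP: jk => <-; apply: off; rewrite li.
  - move/eqP: li => ->; rewrite /S Ha -/(S _ _) off ?oppr0 //.
    by rewrite ?jk // eq_sym jk.
  - by apply: comm0; rewrite ?jk ?li.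
have H0 : Clinear (fun _ : 'M[R[i]]_n.+1 => (0 : 'M[R[i]]_n.+1)).
  by move=> c x y; rewrite scaler0 addr0.
apply: (Clinear_eq Hl H0) => i j; apply/matrixP => k l.
by rewrite [RHS]mxE -tr_delta; exact: gen.
Qed.

Theorem theorem2p12 (R : realType) (n : nat) (Delta : 'M[R[i]]_n -> 'M[R[i]]_n) :
  weak_2_local_derivation Delta -> is_derivation Delta.
Proof.
case: n Delta => [|n] Delta H.
  have e : forall A B : 'M[R[i]]_0, A = B by move=> A B; rewrite [A]flatmx0 [B]flatmx0.
  by split; [move=> c x y | move=> a b]; apply: e.
pose z0 := \sum_k Delta (delta_mx k 0) *m (delta_mx 0 k : 'M[R[i]]_n.+1).
pose f := fun x => Delta x - (z0 *m x - x *m z0).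
have tf u v : \tr (f u *m v) = \tr (Delta u *m v) - \tr (z0 *m (u *m v - v *m u)).
  by rewrite /f mulmxBl trB trad_comm.
have Hf : forall x, f x = 0.
  apply: Szero.
  - move=> c x y; rewrite /f (K3 H) (Clinear_ad z0).
    by rewrite !scalerBr opprD addrACA.
  - move=> a c; rewrite !tf (K2 H) mxtrace_mulC.
    by rewrite -(opprB (a *m c)) mulmxN raddfN opprD opprK.
  - move=> a c ac; by rewrite tf (K4 H) // ac subrr mulmx0 mxtrace0 subrr.
  - move=> p q; rewrite tf !mul_delta_mx_cond eqxx mulr1n mulmxBr trB.
    rewrite sum_unit opprB addrC subrK.
    case: (q == p); last by rewrite mulr0n mulmx0 mxtrace0.
    by rewrite mulr1n sum_unit (K1' H).
have E x : Delta x = z0 *m x - x *m z0 by apply/eqP; rewrite -subr_eq0; have := Hf x; rewrite /f => ->.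
split; first exact: K3.
move=> a b; rewrite !E !mulmxBl !mulmxBr !mulmxA.
by rewrite addrA subrK.
Qed.
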